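(* Let $X$ be a set, $U\subset 2^X$ a non-empty family closed under $\Delta$ and $\cap$, and $\mu:U\to B_2$ a function. (a) If $\mu$ is a measure, then for every ascending sequence $A_0\subset A_1\subset A_2\subset\cdots$ of sets in $U$ such that $A=\bigcup_n A_n\in U$, the binary sequence $(\mu(A_n))_n$ is convergent and $\mu(A)=\lim_{n\to\infty}\mu(A_n)$. (b) Suppose $\mu$ is additive and has the property: for every ascending sequence $(A_n)$ of sets in $U$ whose union $A$ belongs to $U$, the binary sequence $(\mu(A_n))_n$ is convergent and $\mu(A)=\lim_{n\to\infty}\mu(A_n)$. Then $\mu$ is a measure.
   Context: $B_2=\{0,1\}$ with $\oplus$ addition modulo 2. $\mu$ is additive if $\mu(A\Delta B)=\mu(A)\oplus\mu(B)$ for all $A,B\in U$ (equivalently $\mu(A\cup B)=\mu(A)\oplus\mu(B)$ whenever $A\cap B=\emptyset$). $\mu$ is a measure (countably additive) if for every sequence $(A_n)$ of pairwise disjoint sets of $U$ with $\bigcup_nA_n\in U$, the set $\{n:\mu(A_n)=1\}$ is finite and $\mu(\bigcup_nA_n)$ equals the number of such $n$ modulo 2. A binary sequence $(x_n)$ converges to $x_0\in B_2$ if there is $N$ with $x_n=x_0$ for all $n\ge N$; the limit is then $x_0$. *)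

(* Defs.v *)
From mathcomp Require Import all_boot.
From mathcomp Require Import classical_sets.
Set Implicit Arguments. Unset Strict Implicit. Unset Printing Implicit Defensive.
Local Open Scope classical_set_scope.

(* B_2 = bool, with addition modulo 2 = addb (xor). *)

Definition symdiff {X : Type} (A B : set X) : set X := (A `\` B) `|` (B `\` A).

Definition ring_family {X : Type} (U : set (set X)) : Prop :=
  (exists A, U A) /\
  (forall A B, U A -> U B -> U (symdiff A B)) /\
  (forall A B, U A -> U B -> U (A `&` B)).

Definition additive {X : Type} (U : set (set X)) (mu : set X -> bool) : Prop :=
  forall A B, U A -> U B -> mu (symdiff A B) = addb (mu A) (mu B).

(* mu is a measure: for every pairwise disjoint sequence in U with union in U,
   {n | mu (A n) = 1} is finite (i.e. bounded by some N) and mu of the union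
   equals the number of such n modulo 2 (= xor of mu (A n), n < N). *)
Definition is_measure {X : Type} (U : set (set X)) (mu : set X -> bool) : Prop :=
  forall A : nat -> set X,
    (forall n, U (A n)) ->
    (forall i j, i <> j -> A i `&` A j = set0) ->
    U (\bigcup_n A n) ->
    exists N : nat,
      (forall n, (N <= n)%N -> mu (A n) = false) /\
      mu (\bigcup_n A n) = \big[addb/false]_(n < N) mu (A n).

Definition bin_cvg_to (s : nat -> bool) (x0 : bool) : Prop :=
  exists N : nat, forall n, (N <= n)%N -> s n = x0.

Definition ascending_continuous {X : Type} (U : set (set X)) (mu : set X -> bool) : Prop :=
  forall A : nat -> set X,
    (forall n, U (A n)) ->
    (forall n, A n `<=` A n.+1) ->
    U (\bigcup_n A n) ->
    bin_cvg_to (fun n => mu (A n)) (mu (\bigcup_n A n)).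

(* Main.v *)
Require Import Defs.
From mathcomp Require Import all_boot.
From mathcomp Require Import boolp classical_sets.
Set Implicit Arguments. Unset Strict Implicit. Unset Printing Implicit Defensive.
Local Open Scope classical_set_scope.

Lemma seteq_ext {X : Type} (A B : set X) : (forall x, A x <-> B x) -> A = B.
Proof. move=> h; apply/seteqP; split=> x /h //. Qed.

Lemma disjP {X : Type} (A B : set X) : A `&` B = set0 <-> (forall x, A x -> B x -> False).
Proof.
split.
- move=> h x a b; have : (A `&` B) x by split. by rewrite h.
- move=> h; apply: seteq_ext => x; split => // -[a b]; exact: h x a b.
Qed.

Lemma symdiff_disj {X : Type} (A B : set X) : A `&` B = set0 -> symdiff A B = A `|` B.
Proof.
move/disjP=> h; apply: seteq_ext => x; split.
- by case=> -[a _]; [left|right].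
- case=> a; [left|right]; split=> // b; exact: h x a b || exact: h x b a.
Qed.

Lemma symdiff_sub {X : Type} (A B : set X) : B `<=` A -> symdiff A B = A `\` B.
Proof.
move=> h; apply: seteq_ext => x; split.
- case=> -[a nb] //; by case: nb; apply: h.
- by move=> ab; left.
Qed.

Lemma symdiff_self {X : Type} (A : set X) : symdiff A A = set0.
Proof. apply: seteq_ext => x; split=> //; by case=> -[]. Qed.

Lemma big_stab (f : nat -> bool) N M : (N <= M)%N ->
  (forall n, (N <= n)%N -> f n = false) ->
  \big[addb/false]_(n < M) f n = \big[addb/false]_(n < N) f n.
Proof.
elim: M => [|M IH] hNM h.
  by move: hNM; rewrite leqn0 => /eqP ->.
move: hNM; rewrite leq_eqVlt => /orP [/eqP -> //| hlt].
rewrite big_ord_recr /= IH // h // addbF //.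
Qed.

Lemma U_set0 {X : Type} (U : set (set X)) : ring_family U -> U set0.
Proof. case=> [[A0 h0] [hs _]]; rewrite -(symdiff_self A0); exact: hs. Qed.

Lemma meas_set0 {X : Type} (U : set (set X)) mu : ring_family U -> is_measure U mu ->
  mu set0 = false.
Proof.
move=> hU hm.
have [|||N [hN _]] := hm (fun _ => set0).
- move=> _; exact: U_set0.
- move=> i j _; exact: set0I.
- have -> : \bigcup_n (fun _ : nat => @set0 X) n = set0.
    by apply: seteq_ext => x; split=> // -[].
  exact: U_set0.
exact: hN N (leqnn N).
Qed.

Lemma meas_large {X : Type} (U : set (set X)) mu (A : nat -> set X) :
  ring_family U -> is_measure U mu ->
  (forall n, U (A n)) ->
  (forall i j, i <> j -> A i `&` A j = set0) ->
  U (\bigcup_n A n) ->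
  exists N, forall M, (N <= M)%N -> mu (\bigcup_n A n) = \big[addb/false]_(n < M) mu (A n).
Proof.
move=> hU hm hA hd hu; have [N [hN he]] := hm A hA hd hu.
by exists N => M hM; rewrite (big_stab hM hN).
Qed.

Section PartA.
Variables (X : Type) (U : set (set X)) (mu : set X -> bool).
Hypothesis hU : ring_family U.
Hypothesis hm : is_measure U mu.
Variable A : nat -> set X.
Hypothesis hA : forall n, U (A n).
Hypothesis hinc : forall n, A n `<=` A n.+1.

Lemma mono i k : (i <= k)%N -> A i `<=` A k.
Proof.
elim: k => [|k IH]; first by rewrite leqn0 => /eqP ->.
rewrite leq_eqVlt => /orP [/eqP -> //| hlt] x hx.
by apply: hinc; apply: IH hx.
Qed.

Definition B n := if n is m.+1 then A m.+1 `\` A m else A 0.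

Lemma UB n : U (B n).
Proof.
case: n => [|m] //=; rewrite -symdiff_sub //; case: hU => _ [hs _]; exact: hs.
Qed.

Lemma BA n : B n `<=` A n.
Proof. by case: n => [|m] //= x []. Qed.

Lemma Bdisj i j : i <> j -> B i `&` B j = set0.
Proof.
wlog hij : i j / (i < j)%N.
  move=> W hne; case: (ltngtP i j) => h.
  - exact: W.
  - by rewrite setIC; apply: W => // e; apply: hne.
  - by case: hne.
move=> _; apply/disjP => x bi.
case: j hij => [//|j] hij /= [_ nj]; apply: nj.
apply: (mono (i:=i)); first by rewrite -ltnS.
exact: BA.
Qed.

Lemma AB n x : A n x <-> exists2 k, (k <= n)%N & B k x.
Proof.
split.
- elim: n => [|n IH] h; first by exists 0.
  have [hn|hn] := pselect (A n x).
    by have [k hk bk] := IH hn; exists k => //; apply: leqW.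
  by exists n.+1.
- case=> k hk /BA; exact: mono.
Qed.
End PartA.

Theorem theorem4p2 (X : Type) (U : set (set X)) (mu : set X -> bool) :
  ring_family U ->
  (is_measure U mu -> ascending_continuous U mu) /\
  (additive U mu -> ascending_continuous U mu -> is_measure U mu).
Proof.
move=> hU; split.
- move=> hm A hA hinc hu.
  have eU : \bigcup_n A n = \bigcup_n B A n.
    apply: seteq_ext => x; split.
    + case=> n _ hn; have [k _ bk] := proj1 (AB hinc n x) hn; by exists k.
    + by case=> k _ bk; exists k => //; apply: BA.
  have hu' : U (\bigcup_n B A n) by rewrite -eU.
  have [N hN] := meas_large hU hm (UB hU hA hinc) (Bdisj hinc) hu'.
  exists N => n hn.
  rewrite eU (hN n.+1 (leqW hn)).
  pose C k := if (k <= n)%N then B A k else set0.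
  have eC : \bigcup_k C k = A n.
    apply: seteq_ext => x; split.
    + case=> k _; rewrite /C; case: ifP => // hk bk.
      by apply/(AB hinc); exists k.
    + by move/(AB hinc) => [k hk bk]; exists k => //; rewrite /C hk.
  have UC k : U (C k) by rewrite /C; case: ifP => _; [exact: UB|exact: U_set0].
  have dC i j : i <> j -> C i `&` C j = set0.
    move=> hij; rewrite /C; case: ifP => _; case: ifP => _;
      rewrite ?set0I ?setI0 //; exact: Bdisj.
  have hCu : U (\bigcup_k C k) by rewrite eC.
  have [N' hN'] := meas_large hU hm UC dC hCu.
  rewrite -eC (hN' (maxn N' n.+1) (leq_maxl _ _)).
  rewrite (@big_stab (fun k => mu (C k)) n.+1); last first.
  + by move=> k hk; rewrite /C leqNgt hk /=; exact: meas_set0 hU hm.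
  + exact: leq_maxr.
  by apply: eq_bigr => k _; rewrite /C -ltnS ltn_ord.
- move=> hadd hc A hA hd hu.
  have hs := (proj1 (proj2 hU)).
  have mu0 : mu set0 = false.
    case: hU => -[A0 h0] _; rewrite -(symdiff_self A0) hadd //; exact: addbb.
  pose fix S n := if n is m.+1 then S m `|` A m else set0.
  have SP n x : S n x <-> exists2 k, (k < n)%N & A k x.
    elim: n => [|n IH] /=; first by split=> // -[].
    split.
    + case=> [/IH [k hk ak]|an]; first by exists k => //; apply: ltnW.
      by exists n.
    + case=> k; rewrite ltnS leq_eqVlt => /orP [/eqP -> | hk] ak; first by right.
      by left; apply/IH; exists k.
  have Sdisj n : S n `&` A n = set0.
    apply/disjP => x /SP [k hk ak] an.
    have hkn : k <> n by move=> e; move: hk; rewrite e ltnn.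
    exact: (proj1 (disjP _ _) (hd k n hkn)) x ak an.
  have US n : U (S n).
    elim: n => [|n IH] /=; first exact: U_set0.
    rewrite -symdiff_disj //; exact: hs.
  have muS n : mu (S n) = \big[addb/false]_(k < n) mu (A k).
    elim: n => [|n IH] /=; first by rewrite big_ord0.
    by rewrite -symdiff_disj // hadd // big_ord_recr /= IH.
  have Sinc n : S n `<=` S n.+1 by move=> x hx; left.
  have eS : \bigcup_n S n = \bigcup_n A n.
    apply: seteq_ext => x; split.
    + by case=> n _ /SP [k _ ak]; exists k.
    + by case=> k _ ak; exists k.+1 => //; apply/SP; exists k.
  have hu' : U (\bigcup_n S n) by rewrite eS.
  have [N hN] := hc S US Sinc hu'.
  exists N; split.
  + move=> n hn; have := muS n.+1; rewrite big_ord_recr /= -muS.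
    move=> e; have h1 := hN n.+1 (leqW hn); have h2 := hN n hn.
    simpl in h1; rewrite h1 h2 in e; move: e.
    by case: (mu (\bigcup_n S n)); case: (mu (A n)).
  + by rewrite -eS -(hN N (leqnn N)) muS.
Qed.
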